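(* Consider one iteration of noisy Gallager-B decoding on a $(d_v,d_c)$-regular LDPC code with $d_v\ge4$, under the density-evolution assumptions that the correct codeword is all-zero, the decoding neighborhood is cycle-free, and all incoming variable-to-check messages are independently in error with probability $p_0$. Let $d_T\ge2$ be an integer, $d=\lceil\frac{d_v-1}{2}\rceil$, $$p_{\text{thr}}=\binom{d_v-1}{\lfloor\frac{d_v-1}{2}\rfloor}^{-\frac{1}{d-1}}d_c^{-\frac{d}{d-1}}d_T^{-\frac{1}{d-1}}(d_T+1)^{-\frac{d}{d-1}},$$ and suppose $p_{\text{maj}}\le p_{\text{thr}}$, $p_{\text{xor}}\le\frac{d_T+1}{d_c}p_{\text{thr}}$, $p_{\text{and}}\le\frac{d_T+1}{d_T}p_{\text{thr}}$. Let $p_{\text{reg}}=p_{\text{xor}}+(d_T+1)p_{\text{thr}}$. If $p_0<p_{\text{reg}}$, then the bit error probability $p_e^{\text{dec}}$ of each variable-to-check message after one iteration satisfies $$p_{\text{maj}}<p_e^{\text{dec}}\le p_{\text{maj}}+\frac{1}{d_T}p_{\text{thr}}.$$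
   Context: Noisy Gallager-B iteration: for each Tanner-graph edge $(v,c)$, the check-to-variable message $m_{c\to v}=\bigoplus_{v'\in\mathcal N(c)\setminus v}m_{v'\to c}$ is computed by an XOR gate whose output is flipped independently with probability $p_{\text{xor}}$; the new variable-to-check message $m_{v\to c}$ equals $x$ if at least $b=\lfloor\frac{d_v+1}{2}\rfloor$ of the messages $m_{c'\to v}$, $c'\in\mathcal N(v)\setminus c$, equal $x$, and a uniformly random bit otherwise, and is computed by a majority gate whose output is flipped independently with probability $p_{\text{maj}}$ (all gate errors independent, all probabilities $<1/2$). $p_{\text{and}}$ denotes the error probability of AND gates (appearing only in the hypotheses). *)

(* Defs.v *)
From HB Require Import structures.
From mathcomp Require Import all_boot all_order all_algebra.
From mathcomp Require Import all_classical all_reals all_analysis.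
Set Implicit Arguments. Unset Strict Implicit. Unset Printing Implicit Defensive.
Import Order.TTheory GRing.Theory Num.Theory.
Local Open Scope ring_scope.

Definition prob_indep {R : numDomainType} {I : finType} (p : I -> R)
  (E : pred {ffun I -> bool}) : R :=
  \sum_(w : {ffun I -> bool} | E w) \prod_(i : I) (if w i then p i else 1 - p i).

(* Random sources of one noisy Gallager-B iteration on the cycle-free
   decoding neighbourhood of an edge (v,c):
   - inl (inl (j,k)) : incoming message m_{v'->c_j} from the k-th other
                       neighbour v' of the j-th other check c_j of v
                       (true = in error, i.e. equals 1 since the codeword is 0)
   - inl (inr j)     : error (flip) of the XOR gate computing m_{c_j -> v}
   - inr false       : uniformly random tie-breaking bit of the variable node
   - inr true        : error (flip) of the majority gate computing m_{v -> c} *)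
Definition site (dv dc : nat) :=
  ((('I_dv.-1 * 'I_dc.-1) + 'I_dv.-1) + bool)%type.

Definition site_prob {R : numDomainType} (dv dc : nat) (p0 pxor pmaj : R)
  (s : site dv dc) : R :=
  match s with
  | inl (inl _) => p0
  | inl (inr _) => pxor
  | inr true => pmaj
  | inr false => 1 / 2
  end.

Definition check_msg (dv dc : nat) (w : {ffun site dv dc -> bool}) (j : 'I_dv.-1)
  : bool :=
  addb (\big[addb/false]_(k < dc.-1) w (inl (inl (j, k)))) (w (inl (inr j))).

Definition var_msg (dv dc : nat) (w : {ffun site dv dc -> bool}) : bool :=
  let n1 := (\sum_(j < dv.-1) nat_of_bool (@check_msg dv dc w j))%N in
  let n0 := (dv.-1 - n1)%N in
  let b := (dv.+1)./2 in
  let pre := if (b <= n0)%N then false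
             else if (b <= n1)%N then true
             else w (inr false) in
  addb pre (w (inr true)).

Definition pe_dec {R : numDomainType} (dv dc : nat) (p0 pxor pmaj : R) : R :=
  prob_indep (@site_prob R dv dc p0 pxor pmaj) (fun w => @var_msg dv dc w).

Definition dceil (dv : nat) : nat := uphalf dv.-1.

Definition p_thr {R : realType} (dv dc dT : nat) : R :=
  let d := dceil dv in
  let e1 : R := - (1 / (d.-1)%:R) in
  let ed : R := - (d%:R / (d.-1)%:R) in
  ('C(dv.-1, (dv.-1)./2))%:R `^ e1 * (dc%:R `^ ed) * (dT%:R `^ e1)
    * ((dT.+1)%:R `^ ed).

Definition p_reg {R : realType} (dv dc dT : nat) (pxor : R) : R :=
  pxor + (dT.+1)%:R * p_thr dv dc dT.

(* Main.v *)
Require Import Defs.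
From HB Require Import structures.
From mathcomp Require Import all_boot all_order all_algebra.
From mathcomp Require Import all_classical all_reals all_analysis.
From mathcomp Require Import zify ring lra.
Set Implicit Arguments. Unset Strict Implicit. Unset Printing Implicit Defensive.
Import Order.TTheory GRing.Theory Num.Theory.
Local Open Scope ring_scope.

Section Gen.
Variable R : numDomainType.
Variable I : finType.
Variable p : I -> R.

Definition gw (i : I) (b : bool) : R := if b then p i else 1 - p i.

Lemma prob_prod (A : I -> pred bool) :
  prob_indep p (fun w => [forall i, A i (w i)]) =
  \prod_i \sum_(b | A i b) gw i b.
Proof.
rewrite /prob_indep.
under [RHS]eq_bigr => i _ do rewrite big_mkcond /=.
rewrite bigA_distr_bigA /= [LHS]big_mkcond /=.
apply: eq_bigr => w _.
case: forallP => [H|H].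
- by apply: eq_bigr => i _; rewrite H.
- have /existsP[i Hi] : [exists i, ~~ A i (w i)].
    by rewrite -negb_forall; apply/negP => /forallP.
  by rewrite (bigD1 i) //= (negbTE Hi) mul0r.
Qed.

Lemma prob_all (T : {set I}) :
  prob_indep p (fun w => [forall i, (i \in T) ==> w i]) = \prod_(i in T) p i.
Proof.
transitivity (\prod_i \sum_(b | (i \in T) ==> b) gw i b).
  exact: (prob_prod (fun i b => (i \in T) ==> b)).
rewrite [RHS]big_mkcond /=; apply: eq_bigr => i _.
case: (i \in T) => /=.
- by rewrite big_mkcond big_bool /= addr0.
- by rewrite big_bool /gw /= addrC subrK.
Qed.

Lemma prob_single (s0 : I) : prob_indep p (fun w => w s0) = p s0.
Proof.
transitivity (prob_indep p (fun w => [forall i, (i \in [set s0]) ==> w i])).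
  apply: eq_bigl => w; apply/idP/forallP => [h i|h].
    by apply/implyP; rewrite inE => /eqP ->.
  by move: (h s0); rewrite inE eqxx.
by rewrite prob_all big_set1.
Qed.

Hypothesis hp : forall i, 0 <= p i <= 1.

Lemma gw_ge0 i b : 0 <= gw i b.
Proof. by rewrite /gw; case: b; case/andP: (hp i) => // _; rewrite subr_ge0. Qed.

Lemma wt_ge0 (w : {ffun I -> bool}) : 0 <= \prod_i (if w i then p i else 1 - p i).
Proof. by apply: prodr_ge0 => i _; exact: gw_ge0. Qed.

Lemma union_bound (X : finType) (E : pred {ffun I -> bool}) (Q : pred X)
  (F : X -> pred {ffun I -> bool}) :
  (forall w, E w -> exists2 x, Q x & F x w) ->
  prob_indep p E <= \sum_(x | Q x) prob_indep p (F x).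
Proof.
move=> hE; rewrite /prob_indep (exchange_big_dep predT) //=.
rewrite [X in X <= _]big_mkcond /=; apply: ler_sum => w _.
case: ifP => Ew; last by apply: sumr_ge0 => x _; exact: wt_ge0.
have [x Qx Fx] := hE w Ew.
rewrite (bigD1 x) /=; last by rewrite Qx Fx.
by rewrite lerDl; apply: sumr_ge0 => y _; exact: wt_ge0.
Qed.


Definition flipf (s0 : I) (w : {ffun I -> bool}) : {ffun I -> bool} :=
  [ffun i => if i == s0 then ~~ w i else w i].

Lemma flipfK s0 : involutive (flipf s0).
Proof. by move=> w; apply/ffunP => i; rewrite !ffunE; case: eqP => // _; rewrite negbK. Qed.

Lemma flip_decomp (s0 : I) (e : pred {ffun I -> bool}) :
  (forall w, e (flipf s0 w) = e w) ->
  prob_indep p (fun w => e w (+) w s0) =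
  p s0 + (1 - 2 * p s0) *
    \sum_(w | e w && ~~ w s0) \prod_(i | i != s0) gw i (w i).
Proof.
move=> he.
set r := fun w : {ffun I -> bool} => \prod_(i | i != s0) gw i (w i).
have wtE : forall w : {ffun I -> bool}, \prod_i (if w i then p i else 1 - p i) = gw s0 (w s0) * r w.
  by move=> w; rewrite (bigD1 s0).
have rF : forall w : {ffun I -> bool}, r (flipf s0 w) = r w.
  by move=> w; apply: eq_bigr => i /negbTE h; rewrite ffunE h.
set W := fun w : {ffun I -> bool} => \prod_i (if w i then p i else 1 - p i).
set Sr := \sum_(w : {ffun I -> bool} | ~~ w s0 && e w) r w.
have hL : prob_indep p (fun w : {ffun I -> bool} => e w (+) w s0) =
   \sum_(w : {ffun I -> bool} | w s0 && ~~ e w) W w + (1 - p s0) * Sr.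
  rewrite /prob_indep (bigID (fun w : {ffun I -> bool} => w s0)) /=; congr (_ + _).
    by apply: eq_bigl => w; case: (w s0); case: (e w).
  rewrite /Sr mulr_sumr; apply: eq_big => [w|w /andP[_ h]].
    by case: (w s0); case: (e w).
  by rewrite /W wtE (negbTE h).
have hP : p s0 = \sum_(w : {ffun I -> bool} | w s0 && e w) W w + \sum_(w : {ffun I -> bool} | w s0 && ~~ e w) W w.
  by rewrite -(prob_single s0) /prob_indep (bigID e).
have hS3 : \sum_(w : {ffun I -> bool} | w s0 && e w) W w = p s0 * Sr.
  rewrite (reindex_inj (inv_inj (flipfK s0))) /= /Sr mulr_sumr.
  apply: eq_big => [w|w /andP[h _]].
    by rewrite he ffunE eqxx.
  move: h; rewrite ffunE eqxx => h.
  by rewrite /W wtE rF ffunE eqxx h.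
have -> : \sum_(w : {ffun I -> bool} | e w && ~~ w s0) r w = Sr by apply: eq_bigl => w; rewrite andbC.
have hS1 : \sum_(w : {ffun I -> bool} | w s0 && ~~ e w) W w = p s0 - p s0 * Sr.
  by rewrite {1}hP hS3 addrAC subrr add0r.
rewrite hL hS1; ring.
Qed.
End Gen.
Lemma powpow (R : realType) (x e : R) m : (x `^ e) ^+ m = x `^ (e * m%:R).
Proof. by rewrite powRrM powR_mulrn // powR_ge0. Qed.

Lemma thr_id (R : realType) dv dc dT : (4 <= dv)%N -> (1 <= dc)%N -> (1 <= dT)%N ->
  (p_thr dv dc dT : R) ^+ (dceil dv).-1 *
   (('C(dv.-1, (dv.-1)./2))%:R * dc%:R ^+ (dceil dv) * dT%:R * (dT.+1)%:R ^+ (dceil dv)) = 1.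
Proof.
move=> hv hc hT.
rewrite /p_thr.
set m := (dceil dv).-1; set d := dceil dv.
have hm : (m%:R : R) != 0 by rewrite pnatr_eq0 /m /d /dceil; lia.
have E1 : -(1 / m%:R) * m%:R = -1 :> R by field.
have E2 : -(d%:R / m%:R) * m%:R = - d%:R :> R by field.
rewrite !exprMn !powpow E1 E2 !powR_inv1 ?ler0n // !powR_invn ?ler0n //.
have hC : ('C(dv.-1, (dv.-1)./2)%:R : R) != 0.
  by rewrite pnatr_eq0 -lt0n bin_gt0; lia.
have hc' : (dc%:R : R) != 0 by rewrite pnatr_eq0; lia.
have hT' : (dT%:R : R) != 0 by rewrite pnatr_eq0; lia.
have hT1 : (dT.+1%:R : R) != 0 by rewrite pnatr_eq0.
have hcd : (dc%:R ^+ d : R) != 0 by rewrite expf_neq0.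
have hTd : (dT.+1%:R ^+ d : R) != 0 by rewrite expf_neq0.
field; do ! (apply/andP; split) => //.
Qed.
Definition src dv dc (j : 'I_dv.-1) (o : option 'I_dc.-1) : site dv dc :=
  if o is Some k then inl (inl (j, k)) else inl (inr j).

Definition pre_msg (dv dc : nat) (w : {ffun site dv dc -> bool}) : bool :=
  let n1 := (\sum_(j < dv.-1) nat_of_bool (@check_msg dv dc w j))%N in
  let n0 := (dv.-1 - n1)%N in
  let b := (dv.+1)./2 in
  if (b <= n0)%N then false
  else if (b <= n1)%N then true
  else w (inr false).

Lemma var_preE dv dc (w : {ffun site dv dc -> bool}) :
  var_msg w = pre_msg w (+) w (inr true).
Proof. by []. Qed.

Lemma pre_flip dv dc (w : {ffun site dv dc -> bool}) :
  pre_msg (flipf (inr true) w) = pre_msg w.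
Proof.
have hc : forall j, check_msg (flipf (inr true) w) j = check_msg w j.
  move=> j; rewrite /check_msg ffunE /=; congr addb.
  by apply: eq_bigr => k _; rewrite ffunE.
rewrite /pre_msg; under eq_bigr do rewrite hc.
by rewrite ffunE.
Qed.

Lemma sum_card (n : nat) (P : pred 'I_n) :
  (\sum_(j < n) nat_of_bool (P j))%N = #|[set j | P j]|.
Proof.
rewrite -sum1_card [RHS]big_mkcond /=; apply: eq_bigr => j _.
by rewrite inE; case: (P j).
Qed.

Lemma pre_count dv dc (w : {ffun site dv dc -> bool}) : (4 <= dv)%N ->
  pre_msg w -> (dceil dv <= #|[set j | check_msg w j]|)%N.
Proof.
move=> hv; rewrite /pre_msg -sum_card.
set n1 := (\sum_(j < dv.-1) _)%N.
case: ifP => // h _.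
rewrite /dceil; lia.
Qed.

Lemma exists_subset (T : finType) (A : {set T}) k : (k <= #|A|)%N ->
  exists2 S : {set T}, S \subset A & #|S| == k.
Proof.
move=> hk; exists [set x in take k (enum A)].
  by apply/fintype.subsetP => x; rewrite inE => /mem_take; rewrite mem_enum.
rewrite cardsE; move/card_uniqP: (take_uniq k (enum_uniq (mem A))) => ->.
by rewrite size_takel // -cardE.
Qed.

Definition Qc dv dc (x : {set 'I_dv.-1} * {ffun 'I_dv.-1 -> option 'I_dc.-1}) : bool :=
  (#|x.1| == dceil dv) && [forall j, (j \notin x.1) ==> (x.2 j == None)].

Definition Evc dv dc (x : {set 'I_dv.-1} * {ffun 'I_dv.-1 -> option 'I_dc.-1})
  : pred {ffun site dv dc -> bool} :=
  fun w => [forall i, (i \in [set src j (x.2 j) | j in x.1]) ==> w i].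

Lemma pre_cover dv dc (w : {ffun site dv dc -> bool}) : (4 <= dv)%N ->
  pre_msg w -> exists2 x, Qc x & Evc x w.
Proof.
move=> hv /(pre_count hv) /exists_subset [S sSA cS].
pose f : {ffun 'I_dv.-1 -> option 'I_dc.-1} :=
  [ffun j => if (j \in S) && ~~ w (inl (inr j)) then [pick k | w (inl (inl (j, k)))]
             else None].
exists (S, f).
  rewrite /Qc /= cS /=; apply/forallP => j; apply/implyP => /negbTE jS.
  by rewrite ffunE jS.
apply/forallP => i; apply/implyP => /imsetP [j jS ->] /=.
rewrite ffunE jS /=.
case hw: (w (inl (inr j))) => //=.
case: pickP => [k hk|hn] //=.
move/fintype.subsetP: sSA => /(_ j jS); rewrite inE /check_msg hw big1 //.
Qed.

Lemma ev_prob (R : numDomainType) dv dc (sp : site dv dc -> R) x :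
  prob_indep sp (Evc x) = \prod_(j in x.1) sp (src j (x.2 j)).
Proof.
rewrite /Evc prob_all big_imset // => j1 j2 _ _; rewrite /src.
by case: (x.2 j1) => [k1|]; case: (x.2 j2) => [k2|] // [] // ->.
Qed.

Lemma f_sum (R : comNzRingType) dv dc (sp : site dv dc -> R) (S : {set 'I_dv.-1}) :
  \sum_(f : {ffun 'I_dv.-1 -> option 'I_dc.-1} | [forall j, (j \notin S) ==> (f j == None)])
     \prod_(j in S) sp (src j (f j)) = \prod_(j in S) \sum_o sp (src j o).
Proof.
pose F j o := if j \in S then sp (src j o) else (o == None)%:R.
transitivity (\prod_j \sum_o F j o); last first.
  rewrite [RHS]big_mkcond; apply: eq_bigr => j _; rewrite /F; case: (j \in S) => //.
  by rewrite (bigD1 None) //= big1 ?addr0 // => o /negbTE ->.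
rewrite bigA_distr_bigA [LHS]big_mkcond; apply: eq_bigr => f _ /=.
case: forallP => [H|H].
  rewrite [LHS]big_mkcond; apply: eq_bigr => j _; rewrite /F.
  by case jS: (j \in S) => //; have := H j; rewrite jS /= => /eqP ->.
have /existsP[j Hj] : [exists j, ~~ ((j \notin S) ==> (f j == None))].
  by rewrite -negb_forall; apply/negP => /forallP.
rewrite (bigD1 j) //= /F; rewrite negb_imply in Hj.
by case/andP: Hj => /negbTE -> /negbTE ->; rewrite mul0r.
Qed.

Lemma opt_sum (R : numDomainType) (dv dc : nat) (p0 pxor pmaj : R) (j : 'I_dv.-1) :
  \sum_o @site_prob R dv dc p0 pxor pmaj (src j o) = pxor + (dc.-1)%:R * p0.
Proof.
rewrite (bigD1 None) //=; congr (_ + _).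
rewrite (eq_bigr (fun _ => p0)); last by move=> [k|].
have -> : \sum_(o : option 'I_dc.-1 | o != None) p0 = \sum_(o in predC1 (None : option 'I_dc.-1)) p0.
  by apply: eq_bigl => o; rewrite inE.
by rewrite sumr_const cardC1 card_option card_ord /= mulr_natl.
Qed.

Unset Implicit Arguments.
Theorem lemma2 (R : realType) (dv dc dT : nat) (p0 pxor pmaj pand : R) :
  (4 <= dv)%N -> (2 <= dc)%N -> (2 <= dT)%N ->
  0 <= p0 ->
  0 < pxor < 1 / 2 -> 0 < pmaj < 1 / 2 -> 0 < pand < 1 / 2 ->
  pmaj <= p_thr dv dc dT ->
  pxor <= (dT.+1)%:R / dc%:R * p_thr dv dc dT ->
  pand <= (dT.+1)%:R / dT%:R * p_thr dv dc dT ->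
  p0 < p_reg dv dc dT pxor ->
  pmaj < pe_dec dv dc p0 pxor pmaj /\
  pe_dec dv dc p0 pxor pmaj <= pmaj + dT%:R^-1 * p_thr dv dc dT.
Proof.
move=> hv hc hT hp0 /andP[hx0 hx1] /andP[hm0 hm1] _ hmt hxt _ hreg.
have hid := @thr_id R dv dc dT hv (ltnW hc) (ltnW hT).
rewrite /p_reg in hreg.
set t := p_thr dv dc dT in hmt hxt hreg hid *.
set sp := @site_prob R dv dc p0 pxor pmaj.
set m := (dceil dv).-1 in hid.
have hd : dceil dv = m.+1 by rewrite /m /dceil; clear -hv; lia.
rewrite hd in hid.
set c : R := dc%:R in hxt hid *.
set a : R := dT.+1%:R in hxt hreg hid *.
set e : R := dT%:R in hid *.
set C : R := ('C(dv.-1, (dv.-1)./2))%:R in hid.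
have ht0 : 0 <= t by rewrite /t /p_thr !mulr_ge0 // powR_ge0.
have hc2 : 2 <= c by rewrite /c ler_nat.
have he2 : 2 <= e by rewrite /e ler_nat.
have ha3 : 3 <= a by rewrite /a ler_nat; clear -hT; lia.
have hC1 : 1 <= C by rewrite /C ler1n bin_gt0; clear -hv; lia.
set T := c * a * t.
have hT0 : 0 <= T by rewrite /T !mulr_ge0 // ?ler0n.
have hTid : T ^+ m * (C * c * e * a) = 1.
  by rewrite -hid /T !exprMn !exprS; ring.
have hT1 : T < 1.
  rewrite ltNge; apply/negP => h1.
  have hX : 1 <= T ^+ m by apply: exprn_ege1.
  have hK : 12 <= C * c * e * a.
    have h1' : 1 * 2 <= C * c by apply: ler_pM => //; lra.
    have h2' : (1 * 2) * 2 <= C * c * e by apply: ler_pM => //; lra.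
    have h3' : (1 * 2 * 2) * 3 <= C * c * e * a by apply: ler_pM => //; lra.
    lra.
  nra.
have hp01 : p0 < 1.
  have : c * (a * t) < 1 by rewrite mulrA.
  nra.
have hp : forall s, 0 <= sp s <= 1.
  by case => [[[j k]|j]|[]] /=; apply/andP; split; lra.
have hpe : pe_dec dv dc p0 pxor pmaj = pmaj + (1 - 2 * pmaj) *
    \sum_(w : {ffun site dv dc -> bool} | pre_msg w && ~~ w (inr true))
       \prod_(i | i != inr true) gw sp i (w i)
  := @flip_decomp R _ sp (inr true) (@pre_msg dv dc) (@pre_flip dv dc).
split.
  pose ws : {ffun site dv dc -> bool} :=
    [ffun s => if s is inl (inr _) then true else false].
  have hcs : forall j, check_msg ws j.
    by move=> j; rewrite /check_msg ffunE big1 // => k _; rewrite ffunE.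
  have hws : pre_msg ws && ~~ ws (inr true).
    rewrite ffunE andbT.
    have hn : (\sum_(j < dv.-1) nat_of_bool (check_msg ws j))%N = dv.-1.
      under eq_bigr do rewrite hcs.
      by rewrite big_const_ord iter_addn_0 mul1n.
    rewrite /pre_msg hn subnn.
    have -> : ((dv.+1)./2 <= 0)%N = false by clear -hv; lia.
    have -> : ((dv.+1)./2 <= dv.-1)%N = true by clear -hv; lia.
    by [].
  have hr : 0 < \prod_(i | i != inr true) gw sp i (ws i).
    apply: prodr_gt0 => -[[[j k]|j]|[]] _; rewrite /gw ffunE /=; lra.
  rewrite hpe (bigD1 ws) //=.
  set rest := \sum_(i | _) _.
  have hrest : 0 <= rest.
    apply: sumr_ge0 => w _; apply: prodr_ge0 => i _; exact: gw_ge0.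
  rewrite ltrDl; apply: mulr_gt0; first by rewrite subr_gt0; lra.
  exact: ltr_wpDr hrest hr.
have hU : pe_dec dv dc p0 pxor pmaj <= pmaj + prob_indep sp (@pre_msg dv dc).
  apply: le_trans (@union_bound R _ sp hp bool (fun w => var_msg w) (fun _ => true)
     (fun b : bool => if b then (fun w : {ffun site dv dc -> bool} => w (inr true))
                      else (@pre_msg dv dc)) _) _.
    move=> w; rewrite var_preE; case h: (w (inr true)).
      by exists true.
    by rewrite addbF => hw; exists false.
  by rewrite big_bool /= prob_single.
apply: le_trans hU _; rewrite lerD2l.
have hhc1 : (dc.-1)%:R = c - 1 :> R.
  by rewrite /c -subn1 natrB // (ltnW hc).
set eps := pxor + (dc.-1)%:R * p0.
have heps0 : 0 <= eps by rewrite /eps hhc1; nra.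
have hx : c * pxor <= a * t.
  have := ler_wpM2l (ltW (lt_le_trans (ltr0Sn R 1) hc2)) hxt.
  rewrite (_ : c * (a / c * t) = a * t) //; field; lra.
have hepsT : eps <= T by rewrite /eps /T hhc1; nra.
have hKp : 0 < C * c * e * a by rewrite !mulr_gt0 //; lra.
have hCT : C * T ^+ m.+1 = e^-1 * t.
  set X := T ^+ m in hTid.
  have hX : X = (C * c * e * a)^-1 
    by apply: (mulIf (lt0r_neq0 hKp)); rewrite hTid mulVf // lt0r_neq0.
  rewrite exprS -/X hX /T; field.
  do ! (apply/andP; split); apply: lt0r_neq0; lra.
apply: le_trans (@union_bound R _ sp hp _ (@pre_msg dv dc) (@Qc dv dc) (@Evc dv dc)
   (fun w => @pre_cover dv dc w hv)) _.
under eq_bigr do rewrite ev_prob.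
have -> : \sum_(x | Qc x) \prod_(j in x.1) sp (src j (x.2 j)) =
  \sum_(S : {set 'I_dv.-1} | #|S| == dceil dv)
    \sum_(f : {ffun 'I_dv.-1 -> option 'I_dc.-1} | [forall j, (j \notin S) ==> (f j == None)])
      \prod_(j in S) sp (src j (f j)) by rewrite pair_big_dep.
rewrite (eq_bigr (fun _ => eps ^+ m.+1)); last first.
  move=> S /eqP hS; rewrite f_sum (eq_bigr (fun _ => eps)); last by move=> j _; exact: opt_sum.
  by rewrite prodr_const hS hd.
have -> : \sum_(S : {set 'I_dv.-1} | #|S| == dceil dv) eps ^+ m.+1 =
   \sum_(S in [set S : {set 'I_dv.-1} | #|S| == dceil dv]) eps ^+ m.+1.
  by apply: eq_bigl => S; rewrite inE.
rewrite sumr_const card_draws card_ord.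
have hbin : 'C(dv.-1, dceil dv) = 'C(dv.-1, (dv.-1)./2).
  rewrite -bin_sub; last by clear -hv; rewrite /dceil; lia.
  congr 'C(_, _); clear -hv; rewrite /dceil; lia.
rewrite hbin -mulr_natr -/C -hCT mulrC; apply: ler_wpM2l; first lra.
by apply: lerXn2r; rewrite ?nnegrE.
Qed.
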